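(* Let $G$ be a finitely presentable group with no elements of order two. Then there exists a finite presentation $\Pi$ of $G$ such that $\ell(\Pi)=T(G)$ and every relator of $\Pi$ has length at least three; consequently $T_1(G)\le\ell_1(\Pi)\le 3\ell(\Pi)=3T(G)$. In particular, \[ T(G)\le T_1(G)\le 3T(G). \]
   Context: For a finite presentation $\Pi=\langle X\mid R\rangle$: $\ell(\Pi)=\sum_{r\in R}\max\{|r|-2,0\}$ and $\ell_1(\Pi)=\sum_{r\in R}|r|$. For a finitely presentable group $G$: $T(G)=\min\{\ell(\Pi)\}$ and $T_1(G)=\min\{\ell_1(\Pi)\}$, the minima taken over all finite presentations $\Pi$ of $G$. *)

(* Defs.v *)
From Stdlib Require Import ClassicalEpsilon.
From mathcomp Require Import all_boot.
Set Implicit Arguments. Unset Strict Implicit. Unset Printing Implicit Defensive.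

Record group := Group {
  carrier :> Type;
  gmul : carrier -> carrier -> carrier;
  ginv : carrier -> carrier;
  gone : carrier;
  gmulA : forall x y z, gmul x (gmul y z) = gmul (gmul x y) z;
  gmul1 : forall x, gmul gone x = x;
  gmulV : forall x, gmul (ginv x) x = gone
}.

(* A letter is a generator i together with a flag: false = x_i, true = x_i^{-1}. *)
Definition letter (n : nat) := ('I_n * bool)%type.
Definition word (n : nat) := seq (letter n).
Definition linv n (a : letter n) : letter n := (a.1, ~~ a.2).

Record presentation := Pres {
  pn : nat;
  prels : seq (word pn)
}.

(* ell(Pi) = sum_r max(|r|-2, 0) (truncated subtraction), ell_1(Pi) = sum_r |r| *)
Definition ell (P : presentation) : nat := \sum_(r <- prels P) (size r - 2).
Definition ell1 (P : presentation) : nat := \sum_(r <- prels P) size r.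

(* A word is trivial in <X|R> iff it is equivalent to the empty word, i.e. iff it
   lies in the normal closure of R in the free group on X. *)
Inductive pequiv (P : presentation) : word (pn P) -> word (pn P) -> Prop :=
| pe_refl w : @pequiv P w w
| pe_sym u v : @pequiv P u v -> @pequiv P v u
| pe_trans u v w : @pequiv P u v -> @pequiv P v w -> @pequiv P u w
| pe_free u v a : @pequiv P (u ++ v) (u ++ a :: linv a :: v)
| pe_rel u v r : r \in prels P -> @pequiv P (u ++ v) (u ++ r ++ v).

Definition eval_word (G : group) n (f : 'I_n -> G) (w : word n) : G :=
  foldr (fun a acc => gmul (if a.2 then ginv (f a.1) else f a.1) acc) (gone G) w.

Definition presents (P : presentation) (G : group) : Prop :=
  exists f : 'I_(pn P) -> G,
    (forall g : G, exists w, eval_word f w = g) /\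
    (forall w, eval_word f w = gone G <-> @pequiv P w [::]).

Definition finitely_presentable (G : group) : Prop := exists P, presents P G.

Definition is_min_over (m : presentation -> nat) (G : group) (t : nat) : Prop :=
  (exists P, presents P G /\ m P = t) /\ (forall P, presents P G -> t <= m P).

Definition Tinv (G : group) : nat := epsilon (inhabits 0%N) (is_min_over ell G).
Definition T1inv (G : group) : nat := epsilon (inhabits 0%N) (is_min_over ell1 G).

(* Main.v *)
Require Import Defs.
From mathcomp Require Import all_boot.
From Stdlib Require Import Classical ClassicalEpsilon.
Set Implicit Arguments. Unset Strict Implicit. Unset Printing Implicit Defensive.

Lemma g_mulgV (G : group) (x : G) : gmul x (ginv x) = gone G.
Proof.
rewrite -[gmul x _]gmul1 -[in gmul (gone G) _](gmulV (ginv x)).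
rewrite -gmulA [gmul (ginv x) (gmul x _)]gmulA gmulV gmul1 gmulV //.
Qed.

Lemma g_mulg1 (G : group) (x : G) : gmul x (gone G) = x.
Proof. by rewrite -(gmulV x) gmulA g_mulgV gmul1. Qed.

Lemma g_inv_uniq (G : group) (x y : G) : gmul x y = gone G -> y = ginv x.
Proof. by move=> h; rewrite -[y]gmul1 -(gmulV x) -gmulA h g_mulg1. Qed.

Lemma g_invK (G : group) (x : G) : ginv (ginv x) = x.
Proof. by symmetry; apply: g_inv_uniq; apply: gmulV. Qed.

Lemma g_inv1 (G : group) : ginv (gone G) = gone G.
Proof. by symmetry; apply: g_inv_uniq; apply: gmul1. Qed.

Lemma g_inv_eq1 (G : group) (x : G) : ginv x = gone G -> x = gone G.
Proof. by move=> h; rewrite -[x]g_invK h g_inv1. Qed.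

Definition lv (G : group) n (f : 'I_n -> G) (a : letter n) : G :=
  if a.2 then ginv (f a.1) else f a.1.

Lemma eval_cons (G : group) n (f : 'I_n -> G) a w :
  eval_word f (a :: w) = gmul (lv f a) (eval_word f w).
Proof. by []. Qed.

Lemma eval_cat (G : group) n (f : 'I_n -> G) u v :
  eval_word f (u ++ v) = gmul (eval_word f u) (eval_word f v).
Proof.
elim: u => [|a u IH] /=; first by rewrite gmul1.
by rewrite IH gmulA.
Qed.

Lemma eval1 (G : group) n (f : 'I_n -> G) a : eval_word f [:: a] = lv f a.
Proof. by rewrite /= g_mulg1. Qed.

Lemma lv_linv (G : group) n (f : 'I_n -> G) a : lv f (linv a) = ginv (lv f a).
Proof. by rewrite /lv /linv /=; case: a.2 => //=; rewrite g_invK. Qed.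

Lemma linvK n (a : letter n) : linv (linv a) = a.
Proof. by case: a => i b; rewrite /linv /= negbK. Qed.

Lemma pe_ctx P (x y u v : word (pn P)) : pequiv u v -> pequiv (x ++ u ++ y) (x ++ v ++ y).
Proof.
elim=> {u v}.
- move=> w; exact: pe_refl.
- move=> u v _ H; exact: pe_sym.
- move=> u v w _ H1 _ H2; exact: pe_trans H2.
- move=> u v a.
  have -> : x ++ (u ++ v) ++ y = (x ++ u) ++ (v ++ y) by rewrite -!catA.
  have -> : x ++ (u ++ a :: linv a :: v) ++ y = (x ++ u) ++ a :: linv a :: (v ++ y) by rewrite -!catA.
  exact: pe_free.
- move=> u v r hr.
  have -> : x ++ (u ++ v) ++ y = (x ++ u) ++ (v ++ y) by rewrite -!catA.
  have -> : x ++ (u ++ r ++ v) ++ y = (x ++ u) ++ r ++ (v ++ y) by rewrite -!catA.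
  exact: pe_rel.
Qed.

Lemma pe_cat P (u u' v v' : word (pn P)) : pequiv u u' -> pequiv v v' -> pequiv (u ++ v) (u' ++ v').
Proof.
move=> h1 h2; apply: (@pe_trans _ _ (u' ++ v)).
- by have := pe_ctx [::] v h1; rewrite /=.
- by have := pe_ctx u' [::] h2; rewrite /= !cats0.
Qed.

Lemma pe_triv P (a : letter (pn P)) : pequiv [:: a; linv a] [::].
Proof. apply: pe_sym; exact: (@pe_free P [::] [::] a). Qed.

Lemma pe_sound P (G : group) (f : 'I_(pn P) -> G) :
  (forall r, r \in prels P -> eval_word f r = gone G) ->
  forall u v, pequiv u v -> eval_word f u = eval_word f v.
Proof.
move=> hR u v; elim=> {u v}.
- by [].
- by move=> u v _ ->.
- by move=> u v w _ -> _ ->.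
- move=> u v a; rewrite !eval_cat !eval_cons lv_linv.
  by rewrite [gmul (lv f a) _]gmulA g_mulgV gmul1.
- move=> u v r hr; by rewrite !eval_cat (hR r hr) gmul1.
Qed.

Definition flat n m (psi : letter n -> word m) (w : word n) : word m := flatten (map psi w).

Lemma flat_cat n m (psi : letter n -> word m) u v : flat psi (u ++ v) = flat psi u ++ flat psi v.
Proof. by rewrite /flat map_cat flatten_cat. Qed.

Lemma flat_cons n m (psi : letter n -> word m) a u : flat psi (a :: u) = psi a ++ flat psi u.
Proof. by []. Qed.

Lemma pe_map P P' (psi : letter (pn P) -> word (pn P')) :
  (forall r, r \in prels P -> pequiv (flat psi r) [::]) ->
  (forall a, pequiv (psi a ++ psi (linv a)) [::]) ->
  forall u v, pequiv u v -> pequiv (flat psi u) (flat psi v).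
Proof.
move=> hR hD u v; elim=> {u v}.
- move=> w; exact: pe_refl.
- move=> u v _ H; exact: pe_sym.
- move=> u v w _ H1 _ H2; exact: pe_trans H2.
- move=> u v a; rewrite !flat_cat !flat_cons catA.
  have := pe_ctx (flat psi u) (flat psi v) (hD a); rewrite /= => h.
  apply: pe_sym; move: h; by rewrite -!catA.
- move=> u v r hr; rewrite !flat_cat.
  exact: (pe_sym (pe_ctx (flat psi u) (flat psi v) (hR r hr))).
Qed.
Lemma eval_flat (G : group) n m (f : 'I_n -> G) (g : 'I_m -> G) (psi : letter n -> word m) :
  (forall a, eval_word g (psi a) = lv f a) -> forall w, eval_word g (flat psi w) = eval_word f w.
Proof. by move=> h; elim=> [|a w IH] //; rewrite flat_cons eval_cat IH h. Qed.

Lemma tietze P P' (G : group) (f : 'I_(pn P) -> G) (f' : 'I_(pn P') -> G)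
  (phi : letter (pn P') -> word (pn P)) (psi : letter (pn P) -> word (pn P')) :
  (forall g : G, exists w, eval_word f w = g) ->
  (forall w, eval_word f w = gone G <-> @pequiv P w [::]) ->
  (forall a, eval_word f' (psi a) = lv f a) ->
  (forall b, eval_word f (phi b) = lv f' b) ->
  (forall r, r \in prels P' -> eval_word f' r = gone G) ->
  (forall r, r \in prels P -> @pequiv P' (flat psi r) [::]) ->
  (forall a, @pequiv P' (psi a ++ psi (linv a)) [::]) ->
  (forall b, @pequiv P' [:: b] (flat psi (phi b))) ->
  presents P' G.
Proof.
move=> hS hK hA hF hB hC hD hE; exists f'; split.
- move=> g; have [w <-] := hS g; exists (flat psi w); exact: eval_flat.
- move=> w; split.
  + move=> h.
    have e : eval_word f (flat phi w) = gone G by rewrite (eval_flat hF).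
    have := pe_map hC hD ((hK _).1 e) => h2.
    apply: pe_trans h2.
    clear h e; elim: w => [|b w IH]; first exact: pe_refl.
    rewrite flat_cons flat_cat.
    exact: (@pe_cat P' [:: b] _ w _ (hE b) IH).
  + move=> h; exact: (pe_sound hB h).
Qed.
Lemma rel_triv P (r : word (pn P)) : r \in prels P -> pequiv r [::].
Proof. by move=> h; apply: pe_sym; have := @pe_rel P [::] [::] r h; rewrite /= cats0. Qed.

Lemma pe_triv' P (a : letter (pn P)) : pequiv [:: linv a; a] [::].
Proof. by have := @pe_triv P (linv a); rewrite linvK. Qed.

Lemma sum_filter_le (T : eqType) (p : pred T) (F : T -> nat) s :
  \sum_(r <- filter p s) F r <= \sum_(r <- s) F r.
Proof.
elim: s => [|x s IH] /=; first by rewrite big_nil.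
case: (p x); rewrite !big_cons ?leq_add2l //.
exact: leq_trans IH (leq_addl _ _).
Qed.

Lemma size_filter_lt (T : eqType) (x : T) s : x \in s -> size (filter (predC1 x) s) < size s.
Proof.
elim: s => [|y s IH] //=; rewrite in_cons => /orP [/eqP ->|h].
- by rewrite eqxx /= ltnS size_filter count_size.
- case: (y != x) => //=; first by apply: IH.
  by rewrite ltnS size_filter count_size.
Qed.

Lemma flat1 n (w : word n) : flat (fun a => [:: a]) w = w.
Proof. by elim: w => // a w IH; rewrite flat_cons IH. Qed.

Lemma remove_rel n (R : seq (word n)) (G : group) (f : 'I_n -> G) r0 :
  (forall g : G, exists w, eval_word f w = g) ->
  (forall w, eval_word f w = gone G <-> @pequiv (@Pres n R) w [::]) ->
  r0 \in R -> @pequiv (@Pres n (filter (predC1 r0) R)) r0 [::] ->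
  exists P', [/\ presents P' G, ell P' <= ell (@Pres n R) & pn P' + size (prels P') < n + size R].
Proof.
move=> hS hK hr0 htr; exists (@Pres n (filter (predC1 r0) R)); split.
- apply: (@tietze (@Pres n R) (@Pres n (filter (predC1 r0) R)) G f f (fun b => [:: b]) (fun a => [:: a])) => //.
  + by move=> a; rewrite eval1.
  + by move=> a; rewrite eval1.
  + move=> r; rewrite mem_filter => /andP [_ hr]; apply/(hK r); exact: rel_triv.
  + move=> r hr; rewrite flat1; case: (eqVneq r r0) => [-> //|ne].
    by apply: rel_triv; rewrite /= mem_filter /= ne.
  + move=> a; exact: pe_triv.
  + move=> b; exact: pe_refl.
- exact: sum_filter_le.
- by rewrite /= ltn_add2l size_filter_lt.
Qed.

Definition psi m (i : 'I_m.+1) (s : option (letter m)) (a : letter m.+1) : word m :=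
  match unlift i a.1 with
  | Some k => [:: (k, a.2)]
  | None => match s with Some c => [:: if a.2 then linv c else c] | None => [::] end
  end.

Lemma size_flat_psi m (i : 'I_m.+1) s w : size (flat (psi i s) w) <= size w.
Proof.
elim: w => [|a w IH] //; rewrite flat_cons size_cat /=.
have : size (psi i s a) <= 1 by rewrite /psi; case: (unlift i a.1) => //; destruct s.
move=> h; rewrite -(addn1 (size w)) (addnC (size w)); exact: leq_add.
Qed.

Lemma elim_gen m (R : seq (word m.+1)) (G : group) (f : 'I_m.+1 -> G) i s r0 :
  (forall g : G, exists w, eval_word f w = g) ->
  (forall w, eval_word f w = gone G <-> @pequiv (@Pres m.+1 R) w [::]) ->
  r0 \in R ->
  eval_word (fun k => f (lift i k)) (if s is Some c then [:: c] else [::]) = f i ->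
  @pequiv (@Pres m (map (flat (psi i s)) (filter (predC1 r0) R))) (flat (psi i s) r0) [::] ->
  exists P', [/\ presents P' G, ell P' <= ell (@Pres m.+1 R) & pn P' + size (prels P') < m.+1 + size R].
Proof.
move=> hS hK hr0 hs htr.
set R' := map (flat (psi i s)) (filter (predC1 r0) R).
set f' := fun k => f (lift i k).
have hA : forall a, eval_word f' (psi i s a) = lv f a.
  case=> j e; rewrite /psi /=; case: unliftP => [k ->|->].
  - by rewrite eval1.
  - destruct s as [c|]; simpl in hs.
    + rewrite eval1; move: hs; rewrite g_mulg1 => hs.
      rewrite /lv /f' /= -hs; destruct c as [k b]; case: e; destruct b; simpl; by rewrite ?g_invK.
    + rewrite /lv /=; move: hs => /= <-; case: e => //; by rewrite g_inv1.
exists (@Pres m R'); split.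
- apply: (@tietze (@Pres m.+1 R) (@Pres m R') G f f' (fun b => [:: (lift i b.1, b.2)]) (psi i s)) => //.
  + by move=> b; rewrite eval1.
  + move=> r /mapP [r1]; rewrite mem_filter => /andP [_ hr1] ->.
    rewrite (eval_flat hA); apply/(hK r1); exact: rel_triv.
  + move=> r hr; case: (eqVneq r r0) => [-> //|ne].
    by apply: rel_triv; apply: map_f; rewrite mem_filter /= ne.
  + case=> j e; rewrite /psi /linv /=; case: unliftP => [k _|_].
    * exact: (@pe_triv (@Pres m R') (k, e)).
    * destruct s as [c|]; last exact: pe_refl.
      case: e => /=; last exact: (@pe_triv (@Pres m R') c).
      by have := @pe_triv (@Pres m R') (linv c); rewrite linvK.
  + case=> k e; rewrite /flat /= /psi /= liftK /=; exact: pe_refl.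
- rewrite /ell /= big_map; apply: leq_trans (sum_filter_le _ _ _).
  apply: leq_sum => r _; apply: leq_sub2r; exact: size_flat_psi.
- by rewrite /= size_map addSn ltnS leq_add2l size_filter count_size.
Qed.
Lemma step_S m (R : seq (word m.+1)) (G : group) (f : 'I_m.+1 -> G) r :
  (forall g : G, exists w, eval_word f w = g) ->
  (forall w, eval_word f w = gone G <-> @pequiv (@Pres m.+1 R) w [::]) ->
  (forall g : G, gmul g g = gone G -> g = gone G) ->
  r \in R -> size r <= 2 ->
  exists P', [/\ presents P' G, ell P' <= ell (@Pres m.+1 R) & pn P' + size (prels P') < m.+1 + size R].
Proof.
move=> hS hK no2 hr hsz.
have hev : eval_word f r = gone G by apply/(hK r); exact: rel_triv.
case: r hr hsz hev => [|[i e] [|[j e'] [|]]] //= hr _ hev.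
- apply: (remove_rel hS hK hr); exact: pe_refl.
- have hi : f i = gone G.
    move: hev; rewrite g_mulg1 /=; destruct e => // h; exact: g_inv_eq1.
  apply: (@elim_gen m R G f i None _ hS hK hr) => /=; first by rewrite hi.
  rewrite /flat /= /psi /= unlift_none /=; exact: pe_refl.
- rewrite g_mulg1 in hev.
  case: (eqVneq i j) => [eij|hij]; first subst j.
  + case: (eqVneq e e') => [eee|hee]; first subst e'.
    * have hi : f i = gone G.
        have := no2 _ hev; destruct e => // h; exact: g_inv_eq1.
      apply: (@elim_gen m R G f i None _ hS hK hr) => /=; first by rewrite hi.
      rewrite /flat /= /psi /= unlift_none /=; exact: pe_refl.
    * apply: (remove_rel hS hK hr).
      have -> : e' = ~~ e by move: hee; by destruct e; destruct e'.
      exact: (@pe_triv (@Pres m.+1 _) (i, e)).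
  + case: (unliftP i j) hij => [k hk _|-> /eqP //].
    apply: (@elim_gen m R G f i (Some (if e then (k, e') else (k, ~~ e'))) _ hS hK hr) => /=.
    * have hb := g_inv_uniq hev.
      rewrite g_mulg1; move: hb; destruct e; destruct e' => /= hb; rewrite -hk.
      all: try (by rewrite hb g_invK).
      all: try (by rewrite -[f j]g_invK hb g_invK).
    * rewrite /flat /= /psi /= unlift_none hk liftK /=.
      by destruct e; exact: (@pe_triv' (@Pres m _) (k, e')).
Qed.
Lemma step P (G : group) :
  presents P G -> (forall g : G, gmul g g = gone G -> g = gone G) ->
  forall r, r \in prels P -> size r <= 2 ->
  exists P', [/\ presents P' G, ell P' <= ell P & pn P' + size (prels P') < pn P + size (prels P)].
Proof.
case: P => n R [f [hS hK]] /= no2 r hr hsz.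
destruct n as [|m].
- case: r hr hsz => [|a t] hr _.
  + apply: (remove_rel hS hK hr); exact: pe_refl.
  + by case: a.1.
- exact: (step_S hS hK no2 hr hsz).
Qed.

Lemma ex_min (Q : nat -> Prop) k : Q k -> exists t, Q t /\ forall s, Q s -> t <= s.
Proof.
elim: k {-2}k (leqnn k) => [|n IH] k hk Qk.
- exists k; split => // s _; move: hk; rewrite leqn0 => /eqP ->; exact: leq0n.
- case: (classic (exists s, s < k /\ Q s)) => [[s [hs Qs]]|no].
  + apply: (IH s) => //; rewrite -ltnS; exact: leq_trans hs hk.
  + exists k; split => // s Qs; rewrite leqNgt; apply/negP => h; apply: no; by exists s.
Qed.

Lemma min_exists (m : presentation -> nat) (G : group) :
  finitely_presentable G -> is_min_over m G (epsilon (inhabits 0) (is_min_over m G)).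
Proof.
move=> [P0 hP0]; apply: epsilon_spec.
have [t [[P [hP <-]] ht]] := @ex_min (fun t => exists P, presents P G /\ m P = t) (m P0) (ex_intro _ P0 (conj hP0 erefl)).
exists (m P); split; first by exists P.
move=> P' hP'; apply: ht; by exists P'.
Qed.

Lemma ell_le_ell1 P : ell P <= ell1 P.
Proof. apply: leq_sum => r _; exact: leq_subr. Qed.

Lemma ell1_le3 P : (forall r, r \in prels P -> 3 <= size r) -> ell1 P <= 3 * ell P.
Proof.
rewrite /ell /ell1; case: P => n R /=; elim: R => [|r R IH] h; first by rewrite !big_nil.
rewrite !big_cons mulnDr; apply: leq_add.
- have : 3 <= size r by apply: h; rewrite in_cons eqxx.
  case: (size r) => [|[|[|k]]] //= _.
  rewrite subSS subSS subn0 mulnS -(addn3 k) addnC leq_add2l; exact: leq_pmull.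
- apply: IH => r' hr'; apply: h; by rewrite in_cons hr' orbT.
Qed.

Theorem lemma5p2 (G : group) (fpG : finitely_presentable G)
    (no2 : forall g : G, gmul g g = gone G -> g = gone G) :
  exists P : presentation,
    [/\ presents P G,
        ell P = Tinv G,
        (forall r, r \in prels P -> 3 <= size r),
        T1inv G <= ell1 P <= 3 * ell P &
        Tinv G <= T1inv G <= 3 * Tinv G].
Proof.
have [[P1 [hP1 eP1]] minT] := min_exists ell fpG.
have [[Q1 [hQ1 eQ1]] minT1] := min_exists ell1 fpG.
rewrite -/(Tinv G) in eP1 minT; rewrite -/(T1inv G) in eQ1 minT1.
have [k [[P [hP eP ek]] kmin]] := @ex_min (fun k => exists P, [/\ presents P G, ell P = Tinv G & pn P + size (prels P) = k]) _ (ex_intro _ P1 (And3 hP1 eP1 erefl)).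
have h3 : forall r, r \in prels P -> 3 <= size r.
  move=> r hr; rewrite leqNgt; apply/negP => hsz.
  have [P' [hP' le' lt']] := step hP no2 hr hsz.
  have eP' : ell P' = Tinv G by apply/eqP; rewrite eqn_leq (minT P' hP') andbT -eP.
  have := kmin _ (ex_intro _ P' (And3 hP' eP' erefl)).
  by rewrite -ek leqNgt lt'.
have h1 := ell1_le3 h3.
have hT1 : T1inv G <= ell1 P := minT1 P hP.
exists P; split => //.
- by rewrite hT1 h1.
- rewrite -eP (leq_trans hT1 h1) andbT -eQ1.
  rewrite eP; exact: leq_trans (minT Q1 hQ1) (ell_le_ell1 Q1).
Qed.
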